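(* Let $\Gamma$ be a finite group, $R$ a braided Hopf algebra in ${}^\Gamma_\Gamma\mathcal{YD}$, $A=R\#\Bbbk\Gamma$, and $\mathscr D\subseteq A^e$ the subalgebra generated by the elements $(r\#g)\otimes(s\#g^{-1})$ with $r,s\in R$, $g\in\Gamma$. Then $\mathscr D$ is a left $A$-submodule of $\mathcal L(A^e)$ and a right $A$-submodule of $\mathcal R(A^e)$.
   Context: $A^e=A\otimes A^{op}$. The map $\rho:A\to A^e$, $\rho(a)=a_1\otimes\mathcal S_A(a_2)$, is an algebra embedding; $\mathcal L(A^e)$ is $A^e$ with left $A$-action $a\cdot x=\rho(a)x$ (i.e. $a\cdot(x\otimes y)=a_1x\otimes y\,\mathcal S_A(a_2)$) and $\mathcal R(A^e)$ is $A^e$ with right $A$-action $x\cdot a=x\rho(a)$ (i.e. $(x\otimes y)\cdot a=xa_1\otimes\mathcal S_A(a_2)y$). $A$ is the bosonization with comultiplication $\Delta(r\#h)=\sum_{g}r^1\#gh\otimes(r^2)_g\#h$ and antipode $\mathcal S_A(r\#h)=\sum_g h^{-1}g^{-1}\mathcal S_R(r_g)$, where $R=\bigoplus_{g\in\Gamma}R_g$, $R_g=\{r:\delta(r)=g\otimes r\}$ for the coaction $\delta$, and $r_g$ is the $R_g$-component of $r$. *)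

(* Defs.v *)
From HB Require Import structures.
From mathcomp Require Import all_boot all_order all_algebra all_fingroup.
Set Implicit Arguments. Unset Strict Implicit. Unset Printing Implicit Defensive.
Import GRing.Theory.
Local Open Scope ring_scope.

Definition linP (K : fieldType) (U W : lmodType K) (f : U -> W) : Prop :=
  forall (a : K) (x y : U), f (a *: x + y) = a *: f x + f y.

Definition bilin (K : fieldType) (U V W : lmodType K) (f : U -> V -> W) : Prop :=
  (forall v, linP (fun u => f u v)) /\ (forall u, linP (f u)).

(* A tensor product U (x) V of K-vector spaces, given by its universal
   property (existence and uniqueness of the linear factorisation of every
   bilinear map).  Any two such objects are canonically isomorphic.      *)
Record tensor (K : fieldType) (U V : lmodType K) := Tensor {
  tcar :> lmodType K;
  tens : U -> V -> tcar;
  tens_bilin : bilin tens;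
  tlift : forall W : lmodType K, (U -> V -> W) -> tcar -> W;
  tlift_lin : forall (W : lmodType K) (f : U -> V -> W), bilin f -> linP (tlift f);
  tlift_tens : forall (W : lmodType K) (f : U -> V -> W), bilin f ->
      forall u v, tlift f (tens u v) = f u v;
  tlift_uniq : forall (W : lmodType K) (f : U -> V -> W) (h : tcar -> W),
      linP h -> (forall u v, h (tens u v) = f u v) -> forall t, h t = tlift f t
}.
Arguments tens {K U V} _ _ _.
Arguments tlift {K U V} _ {W} _ _.

(* A braided Hopf algebra in the category of Yetter-Drinfeld modules over
   the group algebra K Gamma of a finite group Gamma.
   - The K Gamma-module structure is the action [act g].
   - The K Gamma-comodule structure delta : R -> K Gamma (x) R is encoded,
     via K Gamma (x) R = R^Gamma (Gamma finite), as
     [coact r : {ffun Gamma -> R}], delta(r) = sum_g g (x) coact r g;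
     thus coact r g = r_g is the R_g-component of r.
   - The braiding is c(x (x) y) = x_(-1).y (x) x_(0) = sum_g g.y (x) x_g.
   - T2 = R (x) R and T3 = R (x) (R (x) R) are tensor products.          *)
Record YDHopf (K : fieldType) (gT : finGroupType) := {
  carR :> algType K;
  act : gT -> carR -> carR;
  coact : carR -> {ffun gT -> carR};
  T2 : tensor carR carR;
  T3 : tensor carR T2;
  comul : carR -> T2;
  counit : carR -> K;
  antip : carR -> carR;
  act_lin : forall g, linP (act g);
  act1 : forall r, act 1%g r = r;
  actM : forall g h r, act (g * h)%g r = act g (act h r);
  coact_lin : linP coact;
  coact_coassoc : forall r g h,
      coact (coact r g) h = if g == h then coact r g else 0;
  coact_counit : forall r, \sum_(g : gT) coact r g = r;
  (* Yetter-Drinfeld compatibility: delta(g.r) = g r_(-1) g^-1 (x) g.r_(0) *)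
  yd_compat : forall g r h, coact (act g r) h = act g (coact r (h ^ g)%g);
  act_mul : forall g r s, act g (r * s) = act g r * act g s;
  act_one : forall g, act g 1 = 1;
  coact_mul : forall r s h,
      coact (r * s) h = \sum_(g : gT) coact r g * coact s (g^-1 * h)%g;
  coact_one : forall h, coact 1 h = if h == 1%g then 1 else 0;
  comul_lin : linP comul;
  counit_lin : forall (a : K) x y, counit (a *: x + y) = a * counit x + counit y;
  coassoc : forall r,
      tlift T2 (fun x y => tlift T2 (fun x1 x2 => tens T3 x1 (tens T2 x2 y)) (comul x))
            (comul r)
      = tlift T2 (fun x y => tens T3 x (comul y)) (comul r);
  counitl : forall r, tlift T2 (fun x y => counit x *: y) (comul r) = r;
  counitr : forall r, tlift T2 (fun x y => counit y *: x) (comul r) = r;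
  comul_act : forall g r,
      comul (act g r) = tlift T2 (fun x y => tens T2 (act g x) (act g y)) (comul r);
  comul_coact : forall r h,
      comul (coact r h) =
      \sum_(a : gT) tlift T2 (fun x y => tens T2 (coact x a) (coact y (a^-1 * h)%g))
                         (comul r);
  counit_act : forall g r, counit (act g r) = counit r;
  counit_coact : forall r h, counit (coact r h) = if h == 1%g then counit r else 0;
  (* braided bialgebra axioms: Delta(rs) = (m(x)m)(id(x)c(x)id)(Delta r (x) Delta s) *)
  comul_mul : forall r s,
      comul (r * s) =
      tlift T2 (fun r1 r2 =>
        tlift T2 (fun s1 s2 =>
          \sum_(g : gT) tens T2 (r1 * act g s1) (coact r2 g * s2)) (comul s))
        (comul r);
  comul_one : comul 1 = tens T2 1 1;
  counit_mul : forall r s, counit (r * s) = counit r * counit s;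
  counit_one : counit 1 = 1;
  antip_lin : linP antip;
  antip_act : forall g r, antip (act g r) = act g (antip r);
  antip_coact : forall r h, antip (coact r h) = coact (antip r) h;
  antipl : forall r, tlift T2 (fun x y => antip x * y) (comul r) = counit r *: 1;
  antipr : forall r, tlift T2 (fun x y => x * antip y) (comul r) = counit r *: 1
}.

Arguments act {K gT} _ _ _.
Arguments coact {K gT} _ _.
Arguments T2 {K gT} _.
Arguments T3 {K gT} _.
Arguments comul {K gT} _ _.
Arguments counit {K gT} _ _.
Arguments antip {K gT} _ _.
Arguments carR {K gT} _.

(* Bosonization A = R # K Gamma.  As a vector space A = R (x) K Gamma,
   encoded (Gamma finite) as {ffun Gamma -> R}, with r # g the function
   supported at g with value r.                                         *)
Section Bosonization.
Variables (K : fieldType) (gT : finGroupType) (R : YDHopf K gT).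

Definition Abos := {ffun gT -> carR R}.

Definition sharp (r : carR R) (g : gT) : Abos :=
  [ffun h => if h == g then r else 0].

(* (r # g)(s # h) = r (g.s) # gh *)
Definition mulA (a b : Abos) : Abos :=
  \sum_(g : gT) \sum_(h : gT) sharp (a g * act R g (b h)) (g * h)%g.

Definition oneA : Abos := sharp 1 1%g.

(* Delta(r # h) = sum_g r^1 # g h (x) (r^2)_g # h *)
Definition comulA (TA : tensor Abos Abos) (a : Abos) : TA :=
  \sum_(h : gT) \sum_(g : gT)
     tlift (T2 R) (fun x y => tens TA (sharp x (g * h)%g) (sharp (coact R y g) h))
           (comul R (a h)).

(* S(r # h) = sum_g h^-1 g^-1 S_R(r_g) = sum_g (h^-1 g^-1).S_R(r_g) # h^-1 g^-1 *)
Definition antipA (a : Abos) : Abos :=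
  \sum_(h : gT) \sum_(g : gT)
     sharp (act R (h^-1 * g^-1)%g (antip R (coact R (a h) g))) (h^-1 * g^-1)%g.

Variable TA : tensor Abos Abos.

(* A^e = A (x) A^op : (a (x) b)(c (x) d) = ac (x) db *)
Definition mulAe (x y : TA) : TA :=
  tlift TA (fun a b => tlift TA (fun c d => tens TA (mulA a c) (mulA d b)) y) x.

Definition oneAe : TA := tens TA oneA oneA.

Definition rho (a : Abos) : TA :=
  tlift TA (fun x y => tens TA x (antipA y)) (comulA TA a).

Definition Dgen (x : TA) : Prop :=
  exists (r s : carR R) (g : gT), x = tens TA (sharp r g) (sharp s g^-1).

Definition subalgAe (P : TA -> Prop) : Prop :=
  [/\ P oneAe,
      (forall x y, P x -> P y -> P (x + y)),
      (forall (k : K) x, P x -> P (k *: x)),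
      (forall x y, P x -> P y -> P (mulAe x y)) & P 0].

Definition Dsub (x : TA) : Prop :=
  forall P : TA -> Prop, subalgAe P -> (forall y, Dgen y -> P y) -> P x.

(* left A-submodule of L(A^e) (action a.x = rho(a) x) *)
Definition left_submod_L (P : TA -> Prop) : Prop :=
  [/\ P 0, (forall x y, P x -> P y -> P (x + y)),
      (forall (k : K) x, P x -> P (k *: x)) &
      (forall (a : Abos) x, P x -> P (mulAe (rho a) x))].

(* right A-submodule of R(A^e) (action x.a = x rho(a)) *)
Definition right_submod_R (P : TA -> Prop) : Prop :=
  [/\ P 0, (forall x y, P x -> P y -> P (x + y)),
      (forall (k : K) x, P x -> P (k *: x)) &
      (forall (a : Abos) x, P x -> P (mulAe x (rho a)))].

End Bosonization.

Arguments Dsub {K gT R} TA _.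
Arguments mulAe {K gT R} TA _ _.
Arguments rho {K gT R} TA _.
Arguments comulA {K gT R} TA _.
Arguments left_submod_L {K gT R} TA _.
Arguments right_submod_R {K gT R} TA _.

(* Main.v *)
From HB Require Import structures.
Require Import Defs.
From mathcomp Require Import all_boot all_order all_algebra all_fingroup.
From Stdlib Require Import ClassicalEpsilon.
Set Implicit Arguments. Unset Strict Implicit. Unset Printing Implicit Defensive.
Import GRing.Theory.
Local Open Scope ring_scope.
Local Open Scope quotient_scope.

Definition pb (A : Prop) : bool := if excluded_middle_informative A then true else false.
Lemma pbP A : reflect A (pb A).
Proof. by rewrite /pb; case: excluded_middle_informative => h; constructor. Qed.

Section Quot.
Variables (K : fieldType) (V : lmodType K) (P : V -> Prop).
Hypotheses (P0 : P 0) (PD : forall x y, P x -> P y -> P (x+y))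
  (PZ : forall (k : K) x, P x -> P (k *: x)).

Lemma PN x : P x -> P (- x).
Proof. by move=> h; rewrite -scaleN1r; apply: PZ. Qed.

Definition erel x y := pb (P (x - y)).
Lemma erefl' : reflexive erel.
Proof. by move=> x; apply/pbP; rewrite subrr. Qed.
Lemma esym : symmetric erel.
Proof.
move=> x y; apply/pbP/pbP => h; by rewrite -opprB; apply: PN.
Qed.
Lemma etrans : transitive erel.
Proof.
move=> y x z /pbP h1 /pbP h2; apply/pbP.
by rewrite -(subrKA y); apply: PD.
Qed.

Definition eqv := EquivRel erel erefl' esym etrans.
Definition Q := {eq_quot eqv}.
HB.instance Definition _ := Choice.on Q.
Definition pq : V -> Q := \pi_Q.
Notation repr := (@generic_quotient.repr _ Q).

Lemma qE x y : pq x = pq y <-> P (x - y).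
Proof. rewrite /pq; split; first by move/eqmodP/pbP. by move=> h; apply/eqmodP/pbP. Qed.

Lemma reprE x : P (repr (pq x) - x).
Proof. by apply/qE; rewrite /pq reprK. Qed.

Definition zeroQ : Q := pq 0.
Definition oppQ (a : Q) : Q := pq (- repr a).
Definition addQ (a b : Q) : Q := pq (repr a + repr b).
Definition scaleQ (k : K) (a : Q) : Q := pq (k *: repr a).

Lemma addQE x y : addQ (pq x) (pq y) = pq (x + y).
Proof.
apply/qE. have -> : repr (pq x) + repr (pq y) - (x + y) =
  (repr (pq x) - x) + (repr (pq y) - y) by rewrite opprD addrACA.
by apply: PD; apply: reprE.
Qed.
Lemma oppQE x : oppQ (pq x) = pq (- x).
Proof. apply/qE; rewrite -opprD; apply: PN; exact: reprE. Qed.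
Lemma scaleQE k x : scaleQ k (pq x) = pq (k *: x).
Proof. apply/qE; rewrite -scalerBr; apply: PZ; exact: reprE. Qed.

Lemma pqW (F : Q -> Prop) : (forall x, F (pq x)) -> forall a, F a.
Proof. by move=> h a; rewrite -(reprK a); apply: h. Qed.

Lemma addQA : associative addQ.
Proof. by elim/pqW=> x; elim/pqW=> y; elim/pqW=> z; rewrite !addQE addrA. Qed.
Lemma addQC : commutative addQ.
Proof. by elim/pqW=> x; elim/pqW=> y; rewrite !addQE addrC. Qed.
Lemma add0Q : left_id zeroQ addQ.
Proof. by elim/pqW=> x; rewrite /zeroQ addQE add0r. Qed.
Lemma addNQ : left_inverse zeroQ oppQ addQ.
Proof. by elim/pqW=> x; rewrite oppQE addQE addNr. Qed.

HB.instance Definition _ := GRing.isZmodule.Build Q addQA addQC add0Q addNQ.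

Lemma scaleQA a b v : scaleQ a (scaleQ b v) = scaleQ (a * b) v.
Proof. by elim/pqW: v => x; rewrite !scaleQE scalerA. Qed.
Lemma scale1Q : left_id 1 scaleQ.
Proof. by elim/pqW=> x; rewrite scaleQE scale1r. Qed.
Lemma scaleQDr : right_distributive scaleQ +%R.
Proof.
move=> a; elim/pqW=> x; elim/pqW=> y.
change (scaleQ a (addQ (pq x) (pq y)) = addQ (scaleQ a (pq x)) (scaleQ a (pq y))).
by rewrite addQE !scaleQE addQE scalerDr. Qed.
Lemma scaleQDl v : {morph scaleQ^~ v: a b / a + b}.
Proof.
elim/pqW: v => x a b.
change (scaleQ (a + b) (pq x) = addQ (scaleQ a (pq x)) (scaleQ b (pq x))).
by rewrite !scaleQE addQE scalerDl. Qed.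

HB.instance Definition _ := GRing.Zmodule_isLmodule.Build K Q scaleQA scale1Q scaleQDr scaleQDl.

Lemma pq_lin (k : K) x y : pq (k *: x + y) = k *: pq x + pq y.
Proof.
change (pq (k *: x + y) = addQ (scaleQ k (pq x)) (pq y)).
by rewrite scaleQE addQE. Qed.

Lemma pq0 x : pq x = 0 -> P x.
Proof. by move=> /qE; rewrite subr0. Qed.

End Quot.

Lemma pq0' (K : fieldType) (V : lmodType K) (P : V -> Prop) P0 PD PZ x :
  P x -> @pq K V P P0 PD PZ x = 0.
Proof. by move=> h; apply/qE; rewrite subr0. Qed.

Section Lin.
Variable (K : fieldType).

Lemma linD (U W : lmodType K) (f : U -> W) : linP f -> forall x y, f (x + y) = f x + f y.
Proof. by move=> H x y; have := H 1 x y; rewrite !scale1r. Qed.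
Lemma lin0 (U W : lmodType K) (f : U -> W) : linP f -> f 0 = 0.
Proof.
move=> H; have := H 1 0 0; rewrite !scale1r addr0 => e.
by apply: (@addrI _ (f 0)); rewrite addr0 -e.
Qed.
Lemma linZ (U W : lmodType K) (f : U -> W) : linP f -> forall k x, f (k *: x) = k *: f x.
Proof. by move=> H k x; have := H k x 0; rewrite !addr0 (lin0 H) addr0. Qed.
Lemma lin_sum (U W : lmodType K) (f : U -> W) (H : linP f) (I : Type) (r : seq I) (Pi : pred I) F :
  f (\sum_(i <- r | Pi i) F i) = \sum_(i <- r | Pi i) f (F i).
Proof. exact: (big_morph f (linD H) (lin0 H)). Qed.
Lemma lin_comp (U V W : lmodType K) (f : V -> W) (g : U -> V) :
  linP f -> linP g -> linP (fun x => f (g x)).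
Proof. by move=> Hf Hg k x y; rewrite Hg Hf. Qed.

Lemma tens_ind (U V W : lmodType K) (T : tensor U V) (P : W -> Prop)
  (P0 : P 0) (PD : forall x y, P x -> P y -> P (x+y))
  (PZ : forall (k : K) x, P x -> P (k *: x)) (h : T -> W) :
  linP h -> (forall u v, P (h (tens T u v))) -> forall t, P (h t).
Proof.
move=> hl hp t; apply: (@pq0 K W P P0 PD PZ).
have e1 := @tlift_uniq K U V T _ (fun _ _ => 0 : Q P0 PD PZ)
   (fun t => pq P0 PD PZ (h t)) (lin_comp (@pq_lin K W P P0 PD PZ) hl)
   (fun u v => pq0' P0 PD PZ (hp u v)) t.
have l0 : linP (fun _ : T => 0 : Q P0 PD PZ) by move=> *; rewrite scaler0 addr0.
have e2 := @tlift_uniq K U V T _ (fun _ _ => 0 : Q P0 PD PZ) _ l0 (fun _ _ => erefl) t.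
by rewrite e1 -e2.
Qed.
End Lin.

Section Main.
Variables (K : fieldType) (gT : finGroupType) (R : YDHopf K gT)
  (TA : tensor (Abos R) (Abos R)).

Lemma sharp_lin (g : gT) : linP (fun r : carR R => sharp r g).
Proof.
move=> k x y; apply/ffunP => h; rewrite /sharp !ffunE.
by case: eqP => _; rewrite ?scaler0 ?addr0.
Qed.

Lemma coact_ev (g : gT) : linP (fun r : carR R => coact R r g).
Proof. by move=> k x y; rewrite coact_lin !ffunE. Qed.

Lemma antipA_lin : linP (@antipA K gT R).
Proof.
move=> k x y; rewrite /antipA scaler_sumr -big_split; apply: eq_bigr => h _.
rewrite scaler_sumr -big_split; apply: eq_bigr => g _.
by rewrite !ffunE coact_ev antip_lin Defs.act_lin sharp_lin.
Qed.

Lemma bilinF : bilin (fun x y : Abos R => tens TA x (antipA y)).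
Proof.
split=> v; first exact: (tens_bilin TA).1.
exact: (lin_comp ((tens_bilin TA).2 v) antipA_lin).
Qed.

Lemma bilinG (g h : gT) :
  bilin (fun x y : carR R => tens TA (sharp x (g * h)%g) (sharp (coact R y g) h)).
Proof.
split=> v.
  exact: (lin_comp ((tens_bilin TA).1 _) (sharp_lin _)).
exact: (lin_comp ((tens_bilin TA).2 _) (lin_comp (sharp_lin _) (coact_ev _))).
Qed.

Lemma antipA_sharp (v : carR R) (g h : gT) :
  antipA (sharp (coact R v g) h) =
  sharp (Defs.act R ((g * h)^-1)%g (antip R (coact R v g))) ((g * h)^-1)%g.
Proof.
rewrite /antipA (bigD1 h) //= [X in _ + X]big1 ?addr0; last first.
  move=> h' nh; rewrite big1 // => g' _.
  rewrite /sharp ffunE (negbTE nh).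
  by rewrite (lin0 (coact_ev _)) (lin0 (@antip_lin _ _ R)) (lin0 (@Defs.act_lin _ _ R _))
    -/(sharp 0 _) (lin0 (sharp_lin _)).
rewrite (bigD1 g) //= [X in _ + X]big1 ?addr0; last first.
  move=> g' ng; have ng' : (g == g') = false by rewrite eq_sym; exact: negbTE.
  rewrite /sharp ffunE eqxx coact_coassoc ng'.
  by rewrite (lin0 (@antip_lin _ _ R)) (lin0 (@Defs.act_lin _ _ R _))
    -/(sharp 0 _) (lin0 (sharp_lin _)).
by rewrite /sharp ffunE eqxx coact_coassoc eqxx -invMg.
Qed.

Lemma rho_in (P : TA -> Prop) : subalgAe P -> (forall y, Dgen y -> P y) ->
  forall a, P (rho TA a).
Proof.
case=> _ PD PZ _ P0 Pg a; rewrite /rho /comulA.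
rewrite (lin_sum (@tlift_lin _ _ _ TA _ _ bilinF)); apply: big_ind => // hh _.
rewrite (lin_sum (@tlift_lin _ _ _ TA _ _ bilinF)); apply: big_ind => // g _.
apply: (@tens_ind K _ _ _ (T2 R) P P0 PD PZ
  (fun t => tlift TA (fun x y : Abos R => tens TA x (antipA y))
     (tlift (T2 R) (fun x y : carR R => tens TA (sharp x (g * hh)%g) (sharp (coact R y g) hh)) t))).
  exact: (lin_comp (@tlift_lin _ _ _ TA _ _ bilinF) (@tlift_lin _ _ _ (T2 R) _ _ (bilinG g hh))).
move=> u v; rewrite (tlift_tens (T2 R) (bilinG g hh)) (tlift_tens TA bilinF) antipA_sharp.
by apply: Pg; do 3 eexists.
Qed.

End Main.

Theorem mainTheorem10 (K : fieldType) (gT : finGroupType) (R : YDHopf K gT)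
    (TA : tensor (Abos R) (Abos R)) :
  left_submod_L TA (Dsub TA) /\ right_submod_R TA (Dsub TA).
Proof.
have D0 : Dsub TA 0 by move=> P [].
have DD : forall x y, Dsub TA x -> Dsub TA y -> Dsub TA (x + y).
  by move=> x y hx hy P HP Hg; case: (HP) => _ PD _ _ _; apply: PD; [exact: hx | exact: hy].
have DZ : forall (k : K) x, Dsub TA x -> Dsub TA (k *: x).
  by move=> k x hx P HP Hg; case: (HP) => _ _ PZ _ _; apply: PZ; exact: hx.
split; split => // a x hx P HP Hg; case: (HP) => _ _ _ PM _; apply: PM;
  by [exact: rho_in | exact: hx].
Qed.
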